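(* Let $n\ge3$ and let $\sigma$ be an asymptotically flat Riemannian metric on the complement of a ball in $\mathbb{R}^n$. For any $h>0$ and any $r_1>0$ there exist $r_0\ge r_1$, depending only on $\sigma$, and a rotationally symmetric function $b\colon\mathbb{R}^n\setminus B_{r_0}(0)\to\mathbb{R}$ such that (i) $b>0$; (ii) $b(x)\to0$ as $|x|\to\infty$; (iii) $b(x)\ge h$ for $|x|=r_0$; (iv) $g^{ij}(\sigma,\nabla b)\,{}^\sigma\nabla^2_{ij}b\le0$, i.e. $b$ is a static supersolution.
   Context: Asymptotic flatness: $|\sigma_{ij}-\delta_{ij}|\lesssim\omega(r)$ and $|\partial\sigma_{ij}|\lesssim\omega(r)/r$ for large $r=|x|$, where $\omega$ is bounded with $\omega(r)\to0$ as $r\to\infty$. For $|\nabla w|_\sigma<1$, $g^{ij}(\sigma,\nabla w)=\sigma^{ij}+\frac{\sigma^{ik}\sigma^{jl}w_kw_l}{1-\sigma^{kl}w_kw_l}$, and ${}^\sigma\nabla^2_{ij}w=w_{ij}-\Gamma^k_{ij}w_k$ is the Hessian with respect to $\sigma$. *)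

(* Defs.v *)
From HB Require Import structures.
From mathcomp Require Import all_boot all_order all_algebra.
From mathcomp Require Import all_classical all_reals all_analysis.
Set Implicit Arguments. Unset Strict Implicit. Unset Printing Implicit Defensive.
Import Order.TTheory GRing.Theory Num.Theory.
Import numFieldNormedType.Exports.
Local Open Scope ring_scope.

Section Defs.
Variables (R : realType) (n : nat).

Definition enorm (x : 'rV[R]_n) : R := Num.sqrt (\sum_(i < n) x 0 i ^+ 2).

Definition ebasis (i : 'I_n) : 'rV[R]_n := delta_mx 0 i.

Definition partial (i : 'I_n) (f : 'rV[R]_n -> R) : 'rV[R]_n -> R :=
  fun x => derive f x (ebasis i).

Definition dpartial (s : seq 'I_n) (f : 'rV[R]_n -> R) : 'rV[R]_n -> R :=
  foldr partial f s.

Definition smooth_on (A : set 'rV[R]_n) (f : 'rV[R]_n -> R) : Prop :=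
  forall (s : seq 'I_n) (x : 'rV[R]_n), A x -> differentiable (dpartial s f) x.

Definition riemannian_exterior (r : R) (sigma : 'rV[R]_n -> 'M[R]_n) : Prop :=
  (forall i j, smooth_on [set x | r < enorm x] (fun y => sigma y i j)) /\
  (forall x, r < enorm x -> forall i j, sigma x i j = sigma x j i) /\
  (forall x, r < enorm x -> forall v : 'rV[R]_n, v != 0 ->
      0 < (v *m sigma x *m v^T) 0 0).

Definition asymptotically_flat (sigma : 'rV[R]_n -> 'M[R]_n) : Prop :=
  exists omega : R -> R,
    (exists M : R, forall r, `|omega r| <= M) /\
    (forall eps : R, 0 < eps -> exists M : R, forall r, M <= r -> `|omega r| < eps) /\
    exists (C rho : R), forall x, rho <= enorm x ->
      (forall i j, `|sigma x i j - (i == j)%:R| <= C * omega (enorm x)) /\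
      (forall i j k, `|partial k (fun y => sigma y i j) x| <= C * omega (enorm x) / enorm x).

Definition sinv (sigma : 'rV[R]_n -> 'M[R]_n) (x : 'rV[R]_n) : 'M[R]_n :=
  invmx (sigma x).

Definition christoffel (sigma : 'rV[R]_n -> 'M[R]_n) (k i j : 'I_n)
    (x : 'rV[R]_n) : R :=
  2^-1 * \sum_(l < n) sinv sigma x k l *
    (partial i (fun y => sigma y j l) x + partial j (fun y => sigma y i l) x
     - partial l (fun y => sigma y i j) x).

Definition grad_sq (sigma : 'rV[R]_n -> 'M[R]_n) (w : 'rV[R]_n -> R)
    (x : 'rV[R]_n) : R :=
  \sum_(k < n) \sum_(l < n) sinv sigma x k l * partial k w x * partial l w x.

Definition gmetric (sigma : 'rV[R]_n -> 'M[R]_n) (w : 'rV[R]_n -> R)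
    (i j : 'I_n) (x : 'rV[R]_n) : R :=
  sinv sigma x i j +
  (\sum_(k < n) \sum_(l < n)
     sinv sigma x i k * sinv sigma x j l * partial k w x * partial l w x)
  / (1 - grad_sq sigma w x).

Definition shess (sigma : 'rV[R]_n -> 'M[R]_n) (w : 'rV[R]_n -> R)
    (i j : 'I_n) (x : 'rV[R]_n) : R :=
  partial i (partial j w) x - \sum_(k < n) christoffel sigma k i j x * partial k w x.

Definition static_op (sigma : 'rV[R]_n -> 'M[R]_n) (w : 'rV[R]_n -> R)
    (x : 'rV[R]_n) : R :=
  \sum_(i < n) \sum_(j < n) gmetric sigma w i j x * shess sigma w i j x.

End Defs.

(* Main.v *)
Require Import Defs.
From HB Require Import structures.
From mathcomp Require Import all_boot all_order all_algebra.
From mathcomp Require Import all_classical all_reals all_analysis.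
From mathcomp Require Import ring lra.
Import Order.TTheory GRing.Theory Num.Theory.
Import numFieldNormedType.Exports.
Local Open Scope ring_scope.
Local Open Scope classical_set_scope.
Set Implicit Arguments.

Section Num.
Variable R : realFieldType.

Lemma num_a (L t r2 u : R) : 1 <= L -> L ^+ 4 <= t -> 0 <= r2 -> r2 <= t -> 0 < u ->
  u ^+ 4 * t = 1 -> (L ^+ 3 / 5 / 2 * u / t) ^+ 2 * r2 <= 100^-1.
Proof.
move=> L1 Lt r0 rt u0 ut.
have L0 : 0 < L by lra.
have t0 : 0 < t.
  apply: lt_le_trans Lt; exact: exprn_gt0.
have key : L ^+ 6 * u ^+ 2 <= t.
  rewrite -(ler_pXn2r (isT : (0 < 2)%N)) ?nnegrE; last 2 first.
    - by apply: mulr_ge0; apply: exprn_ge0; apply: ltW.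
    - exact: ltW.
  rewrite -(ler_pM2r t0).
  have -> : (L ^+ 6 * u ^+ 2) ^+ 2 * t = L ^+ 12 * (u ^+ 4 * t) by ring.
  rewrite ut mulr1.
  have -> : t ^+ 2 * t = t ^+ 3 by ring.
  have -> : L ^+ 12 = (L ^+ 4) ^+ 3 by rewrite -exprM.
  by rewrite lerXn2r ?nnegrE // ltW // exprn_gt0.
have h1 : (L ^+ 3 / 5 / 2 * u / t) ^+ 2 * r2 <= (L ^+ 3 / 5 / 2 * u / t) ^+ 2 * t.
  by apply: ler_wpM2l => //; exact: sqr_ge0.
apply: le_trans h1 _.
have -> : (L ^+ 3 / 5 / 2 * u / t) ^+ 2 * t = (L ^+ 6 * u ^+ 2) / t / 100.
  by field; rewrite gt_eqF.
have k2 : L ^+ 6 * u ^+ 2 / t <= 1 by rewrite ler_pdivrMr // mul1r.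
move: k2; set X := L ^+ 6 * u ^+ 2 / t; clear; lra.
Qed.

Lemma num_sphere (L h r0 u t0 : R) : 1 <= L -> 10 * h <= L -> 0 < h -> 0 <= r0 -> r0 <= L ->
  t0 = L ^+ 4 + r0 ^+ 2 -> 0 < u -> u ^+ 4 * t0 = 1 -> h <= L ^+ 3 / 5 * u.
Proof.
move=> L1 Lh h0 r00 rL ht u0 ut.
have L0 : 0 < L by lra.
have t0p : 0 < t0 by rewrite ht; apply: ltr_pwDl; [apply: exprn_gt0|apply: sqr_ge0].
rewrite -(ler_pXn2r (isT : (0 < 4)%N)) ?nnegrE; last 2 first.
  - exact: ltW.
  - by apply: mulr_ge0; [apply: divr_ge0 => //; apply: exprn_ge0; apply: ltW|apply: ltW].
rewrite -(ler_pM2r t0p).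
have -> : (L ^+ 3 / 5 * u) ^+ 4 * t0 = L ^+ 12 / 625 * (u ^+ 4 * t0) by field.
rewrite ut mulr1.
have r2 : r0 ^+ 2 <= L ^+ 4.
  have : r0 ^+ 2 <= L ^+ 2 by rewrite lerXn2r ?nnegrE // ltW.
  move=> h1; apply: le_trans h1 _; rewrite ler_weXn2l //.
have t2 : t0 <= 2 * L ^+ 4 by rewrite ht; lra.
have h4 : (10 * h) ^+ 4 <= L ^+ 4 by rewrite lerXn2r ?nnegrE // ltW // mulr_gt0.
have L84 : L ^+ 4 <= L ^+ 8 by rewrite ler_weXn2l.
have L128 : L ^+ 8 <= L ^+ 12 by rewrite ler_weXn2l.
have e1 : h ^+ 4 * t0 <= h ^+ 4 * (2 * L ^+ 4) by apply: ler_wpM2l => //; apply: exprn_ge0; apply: ltW.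
have e2 : h ^+ 4 * (2 * L ^+ 4) <= L ^+ 4 / 5000 * L ^+ 4.
  have -> : h ^+ 4 * (2 * L ^+ 4) = (10 * h) ^+ 4 / 5000 * L ^+ 4 by field.
  apply: ler_wpM2r; first by apply: exprn_ge0; apply: ltW.
  by move: h4; clear; lra.
have e3 : L ^+ 4 / 5000 * L ^+ 4 = L ^+ 8 / 5000 by rewrite (_ : 8 = 4 + 4)%N // exprD; field.
rewrite e3 in e2.
move: e1 e2 L128; set A := h ^+ 4 * t0; set L8 := L ^+ 8; set L12 := L ^+ 12.
have : 0 <= L8 by rewrite /L8; apply: exprn_ge0; apply: ltW.
clear; lra.
Qed.

Lemma num_decay (c eps t u : R) : 0 < c -> 0 < eps -> 0 < u -> u ^+ 4 * t = 1 ->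
  (c / eps) ^+ 4 < t -> c * u < eps.
Proof.
move=> c0 e0 u0 ut Kt.
have t0 : 0 < t by apply: le_lt_trans Kt; apply: exprn_ge0; apply: divr_ge0; apply: ltW.
suff : c / eps * u < 1.
  by rewrite mulrAC ltr_pdivrMr // mul1r.
rewrite -(expr_lt1 (isT : (0 < 4)%N)); last first.
  by apply: mulr_ge0; [apply: divr_ge0|]; apply: ltW.
rewrite exprMn -(ltr_pM2r t0) -mulrA ut mulr1 mul1r //.
Qed.
End Num.

Section Mx.
Variable R : realFieldType.

Lemma pd_unit n (A : 'M[R]_n) :
  (forall v : 'rV[R]_n, v != 0 -> 0 < (v *m A *m v^T) 0 0) -> A \in unitmx.
Proof.
move=> H; rewrite unitmxE unitfE; apply/negP => /det0P [v v0 vA].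
by have := H v v0; rewrite vA mul0mx mxE ltxx.
Qed.

Lemma inv_close n (A : 'M[R]_n) (d : R) : A \in unitmx ->
  (forall i j, `|A i j - (i == j)%:R| <= d) -> n%:R * d <= 2^-1 ->
  forall i j, `|invmx A i j - (i == j)%:R| <= 2 * d.
Proof.
move=> Au hA hd.
set S := invmx A.
have hSA : forall i j, \sum_(k < n) S i k * A k j = (i == j)%:R.
  move=> i j; have := congr1 (fun M : 'M[R]_n => M i j) (mulVmx Au).
  by rewrite /= !mxE.
have key : forall i j, S i j - (i == j)%:R = - \sum_(k < n) S i k * (A k j - (k == j)%:R).
  move=> i j; rewrite -hSA.
  have -> : S i j = \sum_(k < n) S i k * (k == j)%:R.
    rewrite (bigD1 j) //= eqxx mulr1 big1 ?addr0 // => k /negbTE ->; by rewrite mulr0.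
  rewrite -sumrB -sumrN; apply: eq_bigr => k _; ring.
move=> i j.
have d0 : 0 <= d := le_trans (normr_ge0 _) (hA i i).
set m := \sum_(k < n) `|S i k|.
have m0 : 0 <= m by apply: sumr_ge0 => k _.
have hij : forall j, `|S i j - (j == i)%:R| <= d * m.
  move=> l; rewrite (eq_sym l) key normrN /m mulr_sumr.
  apply: le_trans (ler_norm_sum _ _ _) _; apply: ler_sum => k _.
  by rewrite normrM mulrC; apply: ler_wpM2r.
have hm : m <= 1 + n%:R * (d * m).
  have -> : 1 + n%:R * (d * m) = \sum_(l < n) (`|(l == i)%:R : R| + d * m).
    rewrite big_split /= sumr_const card_ord mulr_natl; congr (_ + _).
    rewrite (bigD1 i) //= eqxx normr1 big1 ?addr0 // => l /negbTE ->; by rewrite normr0.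
  apply: ler_sum => l _.
  have := ler_normD (S i l - (l == i)%:R) (l == i)%:R; rewrite subrK => h.
  by apply: le_trans h _; rewrite addrC lerD2l; exact: hij.
have hm2 : m <= 2.
  have : n%:R * (d * m) <= 2^-1 * m.
    rewrite mulrA; exact: ler_wpM2r.
  clear -hm; lra.
rewrite (eq_sym i); apply: le_trans (hij j) _.
rewrite mulrC; exact: ler_wpM2r.
Qed.
End Mx.

Section Alg.
Variable R : realFieldType.

Lemma sum_norm_le m (f : 'I_m -> R) M : (forall i, `|f i| <= M) ->
  `|\sum_(i < m) f i| <= m%:R * M.
Proof.
move=> H; apply: (le_trans (ler_norm_sum _ _ _)).
have -> : m%:R * M = \sum_(i < m) M by rewrite sumr_const card_ord mulr_natl.
by apply: ler_sum => i _; exact: H.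
Qed.

Lemma sum_delta m (f : 'I_m -> R) k : \sum_(l < m) (k == l)%:R * f l = f k.
Proof.
rewrite (bigD1 k) //= eqxx mul1r big1 ?addr0 // => l; rewrite eq_sym => /negbTE ->.
by rewrite mul0r.
Qed.

Lemma sum_ge m (f : 'I_m -> R) M : (forall i, M <= f i) -> m%:R * M <= \sum_(i < m) f i.
Proof.
move=> H; have -> : m%:R * M = \sum_(i < m) M by rewrite sumr_const card_ord mulr_natl.
by apply: ler_sum => i _; exact: H.
Qed.

Lemma sum_mul m (u v : 'I_m -> R) :
  (\sum_(i < m) u i) * (\sum_(j < m) v j) = \sum_(i < m) \sum_(j < m) u i * v j.
Proof. rewrite mulr_suml; apply: eq_bigr => i _; by rewrite mulr_sumr. Qed.


Lemma main_alg (n : nat) (hn : (3 <= n)%N) (a kap eta gam rho : R)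
  (x : 'I_n -> R) (S : 'M[R]_n) (Gm : 'I_n -> 'I_n -> 'I_n -> R)
  (p : 'I_n -> R) (H : 'I_n -> 'I_n -> R) :
  0 < a -> 0 <= rho -> rho ^+ 2 = \sum_(k < n) x k ^+ 2 ->
  a ^+ 2 * rho ^+ 2 <= 100^-1 -> 0 <= kap -> kap * rho ^+ 2 <= 5 / 2 ->
  (forall i j, `|S i j - (i == j)%:R| <= eta) -> (n%:R ^+ 2) * eta <= 100^-1 ->
  (forall k i j, `|Gm k i j| * rho <= gam) -> (n%:R ^+ 5) * gam <= 1 ->
  (forall k, p k = - a * x k) ->
  (forall i j, H i j = - a * (i == j)%:R + kap * a * x i * x j) ->
  (\sum_(k < n) \sum_(l < n) S k l * p k * p l) < 1 /\
  \sum_(i < n) \sum_(j < n)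
    (S i j + (\sum_(k < n) \sum_(l < n) S i k * S j l * p k * p l) /
              (1 - \sum_(k < n) \sum_(l < n) S k l * p k * p l)) *
    (H i j - \sum_(k < n) Gm k i j * p k) <= 0.
Proof.
move=> a0 rho0 hrho har kap0 hkr hS heta hGm hgam hp hH.
pose G := \sum_(k < n) \sum_(l < n) S k l * p k * p l.
pose g := fun i j => S i j + (\sum_(k < n) \sum_(l < n) S i k * S j l * p k * p l) / (1 - G).
suff : G < 1 /\ \sum_(i < n) \sum_(j < n) g i j * (H i j - \sum_(k < n) Gm k i j * p k) <= 0 by [].
have N3 : 3 <= n%:R :> R by rewrite (ler_nat R 3 n).
have N0 : 0 < n%:R :> R by lra.
have n0 : (0 < n)%N by apply: leq_trans hn.
pose i0 := Ordinal n0.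
have eta0 : 0 <= eta := le_trans (normr_ge0 _) (hS i0 i0).
have eta1 : eta <= 900^-1.
  have : 9 * eta <= n%:R ^+ 2 * eta by apply: ler_wpM2r => //; nra.
  lra.
have xk : forall k, `|x k| <= rho.
  move=> k; have : x k ^+ 2 <= rho ^+ 2.
    rewrite hrho (bigD1 k) //= lerDl; apply: sumr_ge0 => l _; exact: sqr_ge0.
  rewrite -real_normK ?num_real // => h.
  by rewrite -(ler_pXn2r (isT : (0 < 2)%N)) // ?nnegrE.
have Sb : forall i j, `|S i j| <= 1 + eta.
  move=> i j; have := hS i j; have : `|(i == j)%:R : R| <= 1 by case: (i == j); rewrite ?normr0 ?normr1.
  move=> h1 h2; have := ler_normD (S i j - (i == j)%:R) (i == j)%:R.
  rewrite subrK; lra.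
pose y i := \sum_(k < n) S i k * x k.
pose w := \sum_(k < n) \sum_(l < n) S k l * x k * x l.
have hG : G = a ^+ 2 * w.
  rewrite /G /w mulr_sumr; apply: eq_bigr => k _; rewrite mulr_sumr.
  by apply: eq_bigr => l _; rewrite !hp; ring.
have hN : forall i j, \sum_(k < n) \sum_(l < n) S i k * S j l * p k * p l = a ^+ 2 * (y i * y j).
  move=> i j; rewrite /y sum_mul mulr_sumr; apply: eq_bigr => k _; rewrite mulr_sumr.
  by apply: eq_bigr => l _; rewrite !hp; ring.
have hyx : \sum_(i < n) y i * x i = w.
  rewrite /w; apply: eq_bigr => i _; rewrite /y mulr_suml; apply: eq_bigr => k _; ring.
have hw : `|w - rho ^+ 2| <= n%:R ^+ 2 * eta * rho ^+ 2.
  have -> : w - rho ^+ 2 = \sum_(k < n) \sum_(l < n) (S k l - (k == l)%:R) * x k * x l.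
    rewrite hrho /w -sumrB; apply: eq_bigr => k _.
    have -> : x k ^+ 2 = \sum_(l < n) (k == l)%:R * (x k * x l).
      by rewrite sum_delta; ring.
    rewrite -sumrB; apply: eq_bigr => l _; ring.
  have -> : n%:R ^+ 2 * eta * rho ^+ 2 = n%:R * (n%:R * (eta * rho * rho)) by ring.
  apply: sum_norm_le => k; apply: sum_norm_le => l.
  rewrite !normrM; apply: ler_pM; rewrite ?mulr_ge0 //; apply: ler_pM => //.
have hy : forall i, `|y i| <= n%:R * ((1 + eta) * rho).
  move=> i; apply: sum_norm_le => k; rewrite normrM; apply: ler_pM => //.
set N := n%:R : R.
have r20 : 0 <= rho ^+ 2 by exact: sqr_ge0.
have a20 : 0 <= a ^+ 2 by exact: sqr_ge0.
have h1 : N ^+ 2 * eta * rho ^+ 2 <= 100^-1 * rho ^+ 2 by apply: ler_wpM2r.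
have w_le : w <= 101/100 * rho ^+ 2.
  by move: hw => /ler_normlP [_]; lra.
have w_ge : 0 <= w by move: hw => /ler_normlP [h _]; lra.
have G_le : G <= 101/10000.
  rewrite hG; have := ler_wpM2l a20 w_le; lra.
have G_ge : 0 <= G by rewrite hG; exact: mulr_ge0.
split; first by clear -G_le; lra.
have G1 : 0 < 1 - G by clear -G_le; lra.
pose q := a ^+ 2 / (1 - G).
have q0 : 0 <= q by rewrite /q divr_ge0 // ltW.
have hg : forall i j, g i j = S i j + q * (y i * y j).
  by move=> i j; rewrite /g hN /q mulrAC.
have qw : q * w <= 103/10000.
  have -> : q * w = G / (1 - G) by rewrite /q hG mulrAC.
  rewrite ler_pdivrMr //; clear -G_le; lra.
have qr : q * rho ^+ 2 <= 102/10000.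
  have -> : q * rho ^+ 2 = (a ^+ 2 * rho ^+ 2) / (1 - G) by rewrite /q mulrAC.
  rewrite ler_pdivrMr //; clear -G_le G_ge har; lra.
have kw : kap * w <= 2525/1000.
  have := ler_wpM2l kap0 w_le; clear -hkr; lra.
have kw0 : 0 <= kap * w by exact: mulr_ge0.
have qw0 : 0 <= q * w by exact: mulr_ge0.
have kqw : (kap * w) * (q * w) <= 2525/1000 * (103/10000).
  by apply: ler_pM.
have hA0 : N * (1 - eta) <= \sum_(i < n) S i i.
  apply: sum_ge => i.
  have := hS i i; rewrite eqxx /= => /ler_normlP [h _]; clear -h; lra.
have hA : 3 * (1 - eta) <= \sum_(i < n) S i i.
  apply: le_trans hA0; apply: ler_wpM2r => //; clear -eta1; lra.
have hy2 : 0 <= \sum_(i < n) y i ^+ 2 by apply: sumr_ge0 => i _; exact: sqr_ge0.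
have hM : \sum_(i < n) \sum_(j < n) g i j * H i j =
   - a * \sum_(i < n) (S i i + q * y i ^+ 2) + kap * a * w + kap * a * q * w ^+ 2.
  have e1 : \sum_(i < n) (S i i + q * y i ^+ 2) =
      \sum_(i < n) \sum_(j < n) (i == j)%:R * (S i j + q * (y i * y j)).
    by apply: eq_bigr => i _; rewrite sum_delta expr2.
  have e2 : w ^+ 2 = \sum_(i < n) \sum_(j < n) (y i * x i) * (y j * x j).
    by rewrite expr2 -{1}hyx -hyx sum_mul.
  rewrite e1 e2 /w !mulr_sumr -!big_split; apply: eq_bigr => i _.
  rewrite !mulr_sumr -!big_split; apply: eq_bigr => j _.
  rewrite hg hH /=; ring.
have hMb : \sum_(i < n) \sum_(j < n) g i j * H i j <= a * (- 44/100).
  rewrite hM.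
  have -> : - a * \sum_(i < n) (S i i + q * y i ^+ 2) + kap * a * w + kap * a * q * w ^+ 2
     = a * (- \sum_(i < n) S i i - q * \sum_(i < n) y i ^+ 2 + kap * w + (kap * w) * (q * w)).
    by rewrite big_split /= -mulr_sumr; ring.
  apply: ler_wpM2l; first exact: ltW.
  have := mulr_ge0 q0 hy2; clear -hA eta1 kw kqw; lra.
have gam0 : 0 <= gam := le_trans (mulr_ge0 (normr_ge0 _) rho0) (hGm i0 i0 i0).
have hT : forall i j, `|\sum_(k < n) Gm k i j * p k| <= N * (a * gam).
  move=> i j; apply: sum_norm_le => k; rewrite hp !normrM normrN (gtr0_norm a0).
  have := hGm k i j; have := xk k => hx1 hx2.
  have hx3 : `|Gm k i j| * `|x k| <= `|Gm k i j| * rho by apply: ler_wpM2l.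
  have -> : `|Gm k i j| * (a * `|x k|) = a * (`|Gm k i j| * `|x k|) by ring.
  apply: ler_wpM2l; [exact: ltW|exact: le_trans hx3 hx2].
have N2 : 9 <= N ^+ 2 by rewrite expr2; clear -N3; nra.
have e1 : (1 + eta) ^+ 2 <= 10023/10000 by rewrite expr2; clear -eta0 eta1; nra.
have hgb : forall i j, `|g i j| <= N ^+ 2 / 8.
  move=> i j; rewrite hg.
  apply: le_trans (ler_normD _ _) _.
  have hY : `|y i * y j| <= N ^+ 2 * (1 + eta) ^+ 2 * rho ^+ 2.
    rewrite normrM; have -> : N ^+ 2 * (1 + eta) ^+ 2 * rho ^+ 2 =
       (N * ((1 + eta) * rho)) * (N * ((1 + eta) * rho)) by ring.
    by apply: ler_pM => //; exact: hy.
  have hq : `|q * (y i * y j)| <= N ^+ 2 * (10023/10000 * (102/10000)).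
    rewrite normrM (ger0_norm q0).
    apply: le_trans (ler_wpM2l q0 hY) _.
    have -> : q * (N ^+ 2 * (1 + eta) ^+ 2 * rho ^+ 2) = N ^+ 2 * ((1 + eta) ^+ 2 * (q * rho ^+ 2)) by ring.
    apply: ler_wpM2l; first exact: sqr_ge0.
    apply: ler_pM => //; [exact: sqr_ge0|exact: mulr_ge0].
  have := Sb i j; clear -hq N2 eta1; lra.
have hTT : `|\sum_(i < n) \sum_(j < n) g i j * \sum_(k < n) Gm k i j * p k| <= a / 8.
  have : `|\sum_(i < n) \sum_(j < n) g i j * \sum_(k < n) Gm k i j * p k| <=
      N * (N * (N ^+ 2 / 8 * (N * (a * gam)))).
    apply: sum_norm_le => i; apply: sum_norm_le => j; rewrite normrM.
    apply: ler_pM => //; exact: hgb.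
  move=> h; apply: le_trans h _.
  have -> : N * (N * (N ^+ 2 / 8 * (N * (a * gam)))) = (N ^+ 5 * gam) * (a / 8) by ring.
  rewrite -[X in _ <= X]mul1r; apply: ler_wpM2r; last exact: hgam.
  by apply: divr_ge0 => //; exact: ltW.
have -> : \sum_(i < n) \sum_(j < n) g i j * (H i j - \sum_(k < n) Gm k i j * p k) =
   \sum_(i < n) \sum_(j < n) g i j * H i j - \sum_(i < n) \sum_(j < n) g i j * \sum_(k < n) Gm k i j * p k.
  rewrite -sumrB; apply: eq_bigr => i _; rewrite -sumrB; apply: eq_bigr => j _ /=; ring.
move: hTT => /ler_normlP [hT1 _].
clear -hMb hT1 a0; lra.
Qed.
End Alg.

Section S.
Variables (R : realType) (n : nat).
Implicit Types x y : 'rV[R]_n.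

Definition coord (j : 'I_n) := fun y : 'rV[R]_n => y 0 j.

Lemma coord_diff (j : 'I_n) x : differentiable (coord j) x.
Proof. exact: differentiable_coord. Qed.

Lemma coord_derive (j i : 'I_n) x :
  partial i (coord j) x = (i == j)%:R.
Proof.
rewrite /partial /derive; apply: cvg_lim => //.
apply: (@cvg_trans _ (cst ((i == j)%:R : R) @ 0^')); last exact: cvg_cst.
apply: near_eq_cvg; near=> h => /=.
rewrite /coord /ebasis !mxE eqxx /= addrK /GRing.scale /= mulKf ?(eq_sym i) //.
near: h; exact: nbhs_dnbhs_neq.
Unshelve. all: end_near. Qed.

Global Instance is_derive_coord (j i : 'I_n) x :
  is_derive x (ebasis R i) (coord j) ((i == j)%:R).
Proof.
rewrite -(coord_derive j i x); apply: derivableP; apply: diff_derivable.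
exact: coord_diff.
Qed.

Definition P (B : R) : 'rV[R]_n -> R := cst B + \sum_(k < n) (coord k ^+ 2).

Lemma PE B y : P B y = B + \sum_(k < n) y 0 k ^+ 2.
Proof. by rewrite /P !fctE fct_sumE; congr (_ + _); apply: eq_bigr => k _; rewrite fctE. Qed.

Lemma P_diff B x : differentiable (P B) x.
Proof.
apply: differentiableD => //.
apply: differentiable_sum => k.
by apply: differentiableX; exact: coord_diff.
Qed.

Global Instance is_derive_P B (i : 'I_n) x : is_derive x (ebasis R i) (P B) (2 * x 0 i).
Proof.
apply: is_derive_eq.
rewrite add0r (bigD1 i) //= big1 ?addr0.
  by rewrite eqxx /GRing.scale /= mulr1 expr1 /coord.
by move=> k; rewrite eq_sym => /negbTE ->; rewrite /GRing.scale /= mulr0.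
Qed.

Lemma P_derive B (i : 'I_n) x : partial i (P B) x = 2 * x 0 i.
Proof. by rewrite /partial derive_val. Qed.


Lemma comp_diff (f : R -> R) B x : derivable f (P B x) 1 ->
  differentiable (f \o P B) x.
Proof.
move=> df; apply: differentiable_comp; first exact: P_diff.
exact/derivable1_diffP.
Qed.

Lemma comp_is_derive (f : R -> R) B (i : 'I_n) x : derivable f (P B x) 1 ->
  is_derive x (ebasis R i) (f \o P B) (derive1 f (P B x) * (2 * x 0 i)).
Proof.
move=> df.
have -> : derive1 f (P B x) * (2 * x 0 i) = 'D_(ebasis R i) (f \o P B) x.
  rewrite deriveE; last exact: comp_diff.
  rewrite diff_comp; [|exact: P_diff|exact/derivable1_diffP].
  rewrite /= deriv1E // -deriveE; last exact: P_diff.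
  by rewrite -/(partial i (P B) x) P_derive /GRing.scale /= mulrC.
by apply: derivableP; apply: diff_derivable; exact: comp_diff.
Qed.

Lemma P_gt0 B x : 0 < B -> 0 < P B x.
Proof.
move=> B0; rewrite PE; apply: (lt_le_trans B0); rewrite lerDl.
by apply: sumr_ge0 => k _; exact: sqr_ge0.
Qed.

Lemma pow_derivable (a t : R) : 0 < t -> derivable (fun s : R => s `^ a) t 1.
Proof. by move=> t0; apply: (@derivable_powR R 1 a t); rewrite in_itv /= t0. Qed.

Lemma powP_diff a B x : 0 < B -> differentiable (fun y => (P B y) `^ a) x.
Proof. by move=> B0; apply: (@comp_diff (fun s : R => s `^ a)); apply: pow_derivable; exact: P_gt0. Qed.

Global Instance is_derive_powP a B (i : 'I_n) x : 0 < B ->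
  is_derive x (ebasis R i) (fun y => (P B y) `^ a)
    (a * (P B x) `^ (a - 1) * (2 * x 0 i)).
Proof.
move=> B0; have t0 : 0 < P B x by exact: P_gt0.
rewrite -powR_derive1; last by rewrite in_itv /= t0.
by apply: (@comp_is_derive (fun s : R => s `^ a)); exact: pow_derivable.
Qed.


Definition al : R := - 4^-1.
Definition bfun (c B : R) : 'rV[R]_n -> R := fun y => c * (P B y) `^ al.
Definition p1 (c B : R) (j : 'I_n) : 'rV[R]_n -> R :=
  fun y => (c * al * 2) * ((P B y) `^ (al - 1) * y 0 j).

Lemma bfun_diff c B x : 0 < B -> differentiable (bfun c B) x.
Proof. by move=> B0; apply: (@differentiableZ _ _ _ (fun y => (P B y) `^ al)); exact: powP_diff. Qed.

Lemma p1_diff c B j x : 0 < B -> differentiable (p1 c B j) x.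
Proof.
move=> B0; apply: (@differentiableZ _ _ _ (fun y => (P B y) `^ (al - 1) * y 0 j)).
apply: (@differentiableM _ _ (fun y => (P B y) `^ (al - 1)) (coord j)).
  exact: powP_diff.
exact: coord_diff.
Qed.

Lemma bfun_partial c B j : 0 < B -> partial j (bfun c B) = p1 c B j.
Proof.
move=> B0; apply: funext => y; rewrite /partial.
have := @is_deriveZ _ _ _ (fun y => (P B y) `^ al) c y (ebasis R j) _ (@is_derive_powP al B j y B0).
move=> H; rewrite (@derive_val _ _ _ _ _ _ _ H) /p1 /GRing.scale /=.
by ring.
Qed.

Lemma p1_partial c B i j x : 0 < B -> partial i (p1 c B j) x =
  (c * al * 2) * ((P B x) `^ (al - 1) * (i == j)%:R
     + x 0 j * ((al - 1) * (P B x) `^ (al - 1 - 1) * (2 * x 0 i))).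
Proof.
move=> B0; rewrite /partial.
have H1 := @is_derive_powP (al - 1) B i x B0.
have H2 := @is_derive_coord j i x.
have H3 := @is_deriveM _ _ (fun y => (P B y) `^ (al - 1)) (coord j) x (ebasis R i) _ _ H1 H2.
have H := @is_deriveZ _ _ _ _ (c * al * 2) x (ebasis R i) _ H3.
rewrite (@derive_val _ _ _ _ _ _ _ H) /GRing.scale /= /coord.
by [].
Qed.

End S.


Arguments al {R}.
Arguments bfun {R n}.
Arguments p1 {R n}.
Arguments P {R n}.

Section Fin.
Variable R : realType.

Lemma al_facts (t : R) : 0 < t ->
  [/\ 0 < t `^ al, t `^ (al - 1) = t `^ al / t,
      t `^ (al - 1 - 1) = t `^ al / t / t & (t `^ al) ^+ 4 * t = 1].
Proof.
move=> t0; have tn : t != 0 by rewrite gt_eqF.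
have e1 : t `^ (al - 1) = t `^ al / t.
  by rewrite powRB ?tn ?implybT // powRr1 // ltW.
split => //.
- exact: powR_gt0.
- by rewrite powRB ?tn ?implybT // e1 powRr1 // ltW.
- rewrite -powR_mulrn; last exact: powR_ge0.
  rewrite -powRrM (_ : al * 4%:R = -1); last by rewrite /al; field.
  by rewrite powR_inv1 ?ltW // mulVf.
Qed.

End Fin.

Theorem corollary3p2 (R : realType) (n : nat) (hn : (3 <= n)%N)
    (sigma : 'rV[R]_n -> 'M[R]_n) (Rs : R)
    (hsig : riemannian_exterior Rs sigma)
    (haf : asymptotically_flat sigma) :
  forall r1 : R, 0 < r1 ->
  exists r0 : R, r1 <= r0 /\
  forall h : R, 0 < h ->
  exists b : 'rV[R]_n -> R,
    (* rotational symmetry *)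
    (exists beta : R -> R, forall x, r0 <= enorm x -> b x = beta (enorm x)) /\
    (* C^2 regularity on the domain |x| >= r0 *)
    (forall x, r0 <= enorm x ->
       differentiable b x /\ forall j, differentiable (partial j b) x) /\
    (* (i) *) (forall x, r0 <= enorm x -> 0 < b x) /\
    (* (ii) *) (forall eps : R, 0 < eps ->
                  exists M : R, forall x, M <= enorm x -> `|b x| < eps) /\
    (* (iii) *) (forall x, enorm x = r0 -> h <= b x) /\
    (* (iv): |grad b|_sigma < 1 (so g^{ij} is defined) and static supersolution *)
    (forall x, r0 <= enorm x ->
       grad_sq sigma b x < 1 /\ static_op sigma b x <= 0).
Proof.
move=> r1 r10.
case: hsig => _ [_ hpd].
case: haf => om [_ [hdec [C [rho hAF]]]].
set N := n%:R : R.
have N3 : 3 <= N by rewrite /N (ler_nat R 3 n).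
have N1 : 1 <= N by lra.
have N6 : 0 < N ^+ 6 by apply: exprn_gt0; lra.
pose eps := (200 * N ^+ 6 * (`|C| + 1))^-1.
have eps0 : 0 < eps by rewrite /eps invr_gt0; apply: mulr_gt0; [apply: mulr_gt0 => //|]; 
  have := normr_ge0 C; lra.
case: (hdec eps eps0) => M hM.
pose r0 := r1 + `|Rs| + `|rho| + `|M|.
have hr1 : r1 <= r0 by rewrite /r0; have := normr_ge0 Rs; have := normr_ge0 rho; have := normr_ge0 M; lra.
have hRs : Rs < r0 by rewrite /r0; have := ler_norm Rs; have := normr_ge0 rho; have := normr_ge0 M; lra.
have hrho : rho <= r0 by rewrite /r0; have := ler_norm rho; have := normr_ge0 Rs; have := normr_ge0 M; lra.
have hMr : M <= r0 by rewrite /r0; have := ler_norm M; have := normr_ge0 Rs; have := normr_ge0 rho; lra.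
exists r0; split => // h h0.
pose L := 10 * h + r0 + 1.
have L1 : 1 <= L by rewrite /L; lra.
have L0 : 0 < L by lra.
pose B := L ^+ 4.
pose c := L ^+ 3 / 5.
have B0 : 0 < B by apply: exprn_gt0.
have c0 : 0 < c by apply: divr_gt0 => //; apply: exprn_gt0.
have en2 : forall x : 'rV[R]_n, enorm x ^+ 2 = \sum_(k < n) x 0 k ^+ 2.
  move=> x; rewrite /enorm sqr_sqrtr //; apply: sumr_ge0 => k _; exact: sqr_ge0.
have en0 : forall x : 'rV[R]_n, 0 <= enorm x by move=> x; exact: sqrtr_ge0.
have PBE : forall x : 'rV[R]_n, P B x = B + enorm x ^+ 2 by move=> x; rewrite PE en2.
exists (bfun c B).
split.
  exists (fun r => c * (B + r ^+ 2) `^ al) => x _.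
  by rewrite /bfun PBE.
split.
  move=> x _; split; first exact: bfun_diff.
  by move=> j; rewrite (bfun_partial R c B j B0); exact: (p1_diff R c B j x B0).
split.
  move=> x _; rewrite /bfun; apply: mulr_gt0 => //; apply: powR_gt0; exact: P_gt0.
split.
  move=> e e0; exists ((c / e) ^+ 2 + 1) => x hx.
  have t0 : 0 < P B x by exact: P_gt0.
  have [u0 _ _ ut] := @al_facts R _ t0.
  rewrite /bfun ger0_norm; last exact: ltW (mulr_gt0 c0 u0).
  apply: (@num_decay R c e (P B x)) => //.
  rewrite PBE.
  have K0 : 0 <= (c / e) ^+ 2 by exact: sqr_ge0.
  have : (c / e) ^+ 2 < enorm x by lra.
  move=> h1; have h2 : ((c / e) ^+ 2) ^+ 2 < enorm x ^+ 2.
    by rewrite ltr_pXn2r ?nnegrE.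
  rewrite -exprM in h2; apply: lt_le_trans h2 _.
  by rewrite lerDr; exact: ltW.
split.
  move=> x hx.
  have t0 : 0 < P B x by exact: P_gt0.
  have [u0 _ _ ut] := @al_facts R _ t0.
  rewrite /bfun; apply: (@num_sphere _ L h r0 _ (P B x)) => //.
  - by rewrite /L; lra.
  - by have := ltW r10; lra.
  - by rewrite /L; lra.
  - by rewrite PBE hx.
move=> x hx.
set rr := enorm x.
have rr0 : 0 < rr by rewrite /rr; lra.
have t0 : 0 < P B x by exact: P_gt0.
set t := P B x.
have [u0 e1 e2 ut] := @al_facts R _ t0.
set u := t `^ al.
have tE : t = B + rr ^+ 2 by rewrite /t PBE.
have [hsd hpart] := hAF x (le_trans hrho hx).
set d := C * om (enorm x) in hsd hpart.
have i0 : 'I_n by apply: (@Ordinal n 0); apply: leq_trans hn.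
have d0 : 0 <= d := le_trans (normr_ge0 _) (hsd i0 i0).
have dsm : N ^+ 6 * d <= 200^-1.
  have hom : `|om (enorm x)| < eps by apply: hM; apply: le_trans hMr hx.
  have : d <= `|C| * eps.
    apply: le_trans (ler_norm d) _; rewrite /d normrM.
    by apply: ler_wpM2l => //; exact: ltW.
  move=> hd.
  have C0 : 0 < `|C| + 1 by have := normr_ge0 C; lra.
  have hd2 : `|C| * eps <= (200 * N ^+ 6)^-1.
    have -> : `|C| * eps = (`|C| / (`|C| + 1)) * (200 * N ^+ 6)^-1.
      by rewrite /eps invfM; ring.
    rewrite -[X in _ <= X]mul1r; apply: ler_wpM2r.
      by rewrite invr_ge0; apply: mulr_ge0 => //; exact: ltW.
    by rewrite ler_pdivrMr // mul1r lerDl.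
  have := ler_wpM2l (ltW N6) (le_trans hd hd2).
  have -> : N ^+ 6 * (200 * N ^+ 6)^-1 = 200^-1 by rewrite invfM mulrCA mulfV ?mulr1 // gt_eqF.
  done.
have N2d : N ^+ 2 * d <= N ^+ 6 * d by apply: ler_wpM2r => //; rewrite ler_weXn2l.
have N1d : N * d <= N ^+ 6 * d by apply: ler_wpM2r => //; rewrite -{1}(expr1 N) ler_weXn2l.
have dle : d <= N * d by rewrite -{1}(mul1r d); apply: ler_wpM2r.
have su : sigma x \in unitmx.
  by apply: pd_unit; apply: hpd; lra.
have hS := @inv_close R n (sigma x) d su hsd (ltac:(lra)).
have Sb : forall k l, `|sinv sigma x k l| <= 1 + 2 * d.
  move=> k l; have := ler_normD (sinv sigma x k l - (k == l)%:R) (k == l)%:R.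
  rewrite subrK => h1; apply: le_trans h1 _.
  have : `|(k == l)%:R : R| <= 1 by case: (k == l); rewrite ?normr0 ?normr1.
  have := hS k l; rewrite /sinv; lra.
have hGm : forall k i j, `|christoffel sigma k i j x| * rr <= 3 * N * d.
  move=> k i j; rewrite /christoffel normrM.
  have hsum : `|\sum_(l < n) sinv sigma x k l *
     (partial i (fun y => sigma y j l) x + partial j (fun y => sigma y i l) x
      - partial l (fun y => sigma y i j) x)| <= N * ((1 + 2 * d) * (3 * (d / rr))).
    apply: sum_norm_le => l; rewrite normrM; apply: ler_pM => //.
    have := hpart i j l; have := hpart i l j; have := hpart j l i.
    rewrite -/rr -/d => p1 p2 p3.
    apply: le_trans (ler_normB _ _) _; apply: le_trans (lerD (ler_normD _ _) (lexx _)) _.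
    lra.
  have : `|2^-1 : R| * `|\sum_(l < n) sinv sigma x k l *
     (partial i (fun y => sigma y j l) x + partial j (fun y => sigma y i l) x
      - partial l (fun y => sigma y i j) x)| * rr <= 2^-1 * (N * ((1 + 2 * d) * (3 * (d / rr)))) * rr.
    apply: ler_wpM2r; first exact: ltW.
    rewrite ger0_norm //; apply: ler_wpM2l => //.
  move=> h1; apply: le_trans h1 _.
  have -> : 2^-1 * (N * ((1 + 2 * d) * (3 * (d / rr)))) * rr = (3 * N * d) * ((1 + 2 * d) / 2).
    by field; rewrite gt_eqF.
  rewrite -[X in _ <= X]mulr1; apply: ler_wpM2l.
    by apply: mulr_ge0 => //; apply: mulr_ge0 => //; lra.
  by lra.
pose a := c / 2 * u / t.
have a0 : 0 < a by apply: divr_gt0 => //; apply: mulr_gt0 => //; apply: divr_gt0.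
pose kap := 5 / 2 / t.
have hp : forall k, partial k (bfun c B) x = - a * x 0 k.
  move=> k; rewrite bfun_partial // /p1 e1 /a /u /t /al; by field; rewrite gt_eqF.
have hH : forall i j, partial i (partial j (bfun c B)) x =
    - a * (i == j)%:R + kap * a * x 0 i * x 0 j.
  move=> i j; rewrite bfun_partial // p1_partial // e1 e2 /a /kap /u /t /al.
  by field; rewrite gt_eqF.
have rt : rr ^+ 2 <= P B x by rewrite PBE lerDr ltW.
have Lt : L ^+ 4 <= P B x by rewrite PBE lerDl sqr_ge0.
have har : a ^+ 2 * rr ^+ 2 <= 100^-1.
  rewrite /a /c; apply: num_a; [done|exact: Lt|exact: sqr_ge0|exact: rt|exact: u0|exact: ut].
have kap0 : 0 <= kap by rewrite /kap; apply: divr_ge0 => //; exact: ltW.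
have hkr : kap * rr ^+ 2 <= 5 / 2.
  rewrite /kap mulrAC ler_pdivrMr // ler_pM2l //; try lra.
have := @main_alg R n hn a kap (2 * d) (3 * N * d) rr (fun k => x 0 k) (sinv sigma x)
  (fun k i j => christoffel sigma k i j x) (fun k => partial k (bfun c B) x)
  (fun i j => partial i (partial j (bfun c B)) x) a0 (ltW rr0) (en2 x) har kap0 hkr hS _
  hGm _ hp hH.
apply.
- by move: N2d dsm; clear; lra.
- have -> : N ^+ 5 * (3 * N * d) = 3 * (N ^+ 6 * d) by rewrite exprS; ring.
  by move: dsm; clear; lra.
Qed.
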